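(* Let $\rho:\mathcal{X}\to\mathbb{R}$ be a monetary risk measure, $\mathcal{M}\subseteq\mathcal{M}_1$ and $\mathbb{P}\in\mathcal{M}_1$. Suppose $\mathbb{P}$ is generalized equivalent to $\mathcal{M}$ and $\mathcal{M}$ is closed under countable convex combinations. Then for all $X\in L^\infty(\mathbb{P})$, $\rho^{\mathbb{P}}(X)=\rho^{\mathcal{M}}(X)$.
   Context: $(\Omega,\mathcal{F})$ is a measurable space, $\mathcal{M}_1$ the set of probability measures on it, $\mathcal{X}$ the space of pointwise bounded $\mathcal{F}$-measurable real functions. A monetary risk measure is $\rho:\mathcal{X}\to\mathbb{R}$ with, pointwise: $X\ge0\Rightarrow\rho(X)\le0$; $X\ge Y\Rightarrow\rho(X)\le\rho(Y)$; $\rho(X+a)=\rho(X)-a$ for $a\in\mathbb{R}$. For $P\in\mathcal{M}_1$ and $X\in L^\infty(P)=L^\infty(\Omega,\mathcal{F},P)$, $\rho^P(X)=\inf\{\rho(\widetilde X):\widetilde X\in\mathcal{X},P(\widetilde X=X)=1\}$. For $\mathcal{M}\subseteq\mathcal{M}_1$, $\rho^{\mathcal{M}}(X)=\sup_{P\in\mathcal{M}}\rho^P(X)$ for $X\in\bigcap_{P\in\mathcal{M}}L^\infty(P)$. $\mathbb{P}$ is generalized equivalent to $\mathcal{M}$ if (1) $P\ll\mathbb{P}$ for all $P\in\mathcal{M}$, and (2) for $A\in\mathcal{F}$, $P(A)=0$ for all $P\in\mathcal{M}$ implies $\mathbb{P}(A)=0$. Closed under countable convex combinations means $\sum_i\lambda_iP_i\in\mathcal{M}$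 whenever $P_i\in\mathcal{M}$, $\lambda_i\ge0$, $\sum_i\lambda_i=1$. *)

(* Defs.v *)
From HB Require Import structures.
From mathcomp Require Import all_boot all_order all_algebra.
From mathcomp Require Import all_classical all_reals all_analysis.
Set Implicit Arguments. Unset Strict Implicit. Unset Printing Implicit Defensive.
Import Order.TTheory GRing.Theory Num.Theory.
Local Open Scope classical_set_scope.
Local Open Scope ring_scope.

Section risk.
Context (d : measure_display) (T : measurableType d) (R : realType).

Definition bdd_meas (X : T -> R) : Prop :=
  measurable_fun setT X /\ exists c : R, forall w, `|X w| <= c.

Definition monetary_risk_measure (rho : (T -> R) -> R) : Prop :=
  [/\ forall X, bdd_meas X -> (forall w, 0 <= X w) -> rho X <= 0,
      forall X Y, bdd_meas X -> bdd_meas Y -> (forall w, Y w <= X w) ->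
        rho X <= rho Y
    & forall X (a : R), bdd_meas X -> rho (fun w => X w + a) = rho X - a].

(* L^oo(P): F-measurable functions that are P-essentially bounded
   (represented by their representatives) *)
Definition Linfty (P : probability T R) (X : T -> R) : Prop :=
  measurable_fun setT X /\ exists c : R, P [set w | c < `|X w|] = 0%E.

Definition rhoP (rho : (T -> R) -> R) (P : probability T R) (X : T -> R)
  : \bar R :=
  ereal_inf [set (rho Xt)%:E | Xt in
             [set Xt | bdd_meas Xt /\ P [set w | Xt w = X w] = 1%E]].

Definition rhoM (rho : (T -> R) -> R) (M : set (probability T R))
  (X : T -> R) : \bar R :=
  ereal_sup [set rhoP rho P X | P in M].

Definition gen_equiv (PP : probability T R) (M : set (probability T R)) : Prop :=
  (forall P, M P -> P `<< PP) /\
  (forall A, measurable A -> (forall P, M P -> P A = 0%E) -> PP A = 0%E).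

Definition closed_countable_convex (M : set (probability T R)) : Prop :=
  forall (Ps : nat -> probability T R) (lam : nat -> R),
    (forall i, M (Ps i)) -> (forall i, 0 <= lam i) ->
    (\sum_(0 <= i <oo) (lam i)%:E = 1)%E ->
    exists Q : probability T R, M Q /\
      forall A, measurable A ->
        Q A = (\sum_(0 <= i <oo) ((lam i)%:E * Ps i A))%E.

End risk.

(* Main.v *)
Require Import Defs.
From HB Require Import structures.
From mathcomp Require Import all_boot all_order all_algebra.
From mathcomp Require Import all_classical all_reals all_analysis.
Set Implicit Arguments. Unset Strict Implicit. Unset Printing Implicit Defensive.
Import Order.TTheory GRing.Theory Num.Theory.
Local Open Scope classical_set_scope.
Local Open Scope ring_scope.

Section aux.
Context (d : measure_display) (T : measurableType d) (R : realType).
Local Open Scope ereal_scope.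

Lemma null_bigcup (mu : {measure set T -> \bar R}) (F : nat -> set T) :
  (forall n, measurable (F n)) -> (forall n, mu (F n) = 0) ->
  mu (\bigcup_n F n) = 0.
Proof.
move=> mF F0; apply/eqP; rewrite -measure_le0.
have := @measure_sigma_subadditive _ _ _ mu (\bigcup_n F n) F mF (bigcupT_measurable _ mF) (@subset_refl _ _).
move=> /le_trans; apply.
by rewrite eseries0.
Qed.

Lemma maxel (PP : probability T R) (F : set (set T)) :
  (forall A, F A -> measurable A) -> F set0 ->
  (forall N : nat -> set T, (forall n, F (N n)) -> F (\bigcup_n N n)) ->
  exists B, F B /\ forall A, F A -> PP A <= PP B.
Proof.
move=> Fm F0 FU.
set s := ereal_sup [set PP A | A in F].
have s0 : 0 <= s by apply: ereal_sup_ubound; exists set0 => //; rewrite measure0.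
have s1 : s <= 1 by apply: ge_ereal_sup => _ [A FA <-]; apply: probability_le1; exact: Fm.
have sfin : s \is a fin_num by rewrite ge0_fin_numE// (le_lt_trans s1)// ltey.
have /choice[N HN] : forall n : nat, exists A, F A /\ s - ((n.+1%:R)^-1)%:E < PP A.
  move=> n; have [_ [A FA <-] lt] := @ub_ereal_sup_adherent _ [set PP A | A in F] ((n.+1%:R)^-1) ltac:(by []) sfin.
  by exists A.
exists (\bigcup_n N n); split; first by apply: FU => n; case: (HN n).
have mB : measurable (\bigcup_n N n) by apply: bigcupT_measurable => n; apply: Fm; case: (HN n).
have sB : s <= PP (\bigcup_n N n).
  apply/lee_addgt0Pr => e e0.
  have [n _ hn] : exists2 n : nat, True & ((n.+1%:R)^-1 < e)%R.
    have := near_infty_natSinv_lt (PosNum e0).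
    by move=> /= [m _ Hm]; exists m => //; apply: Hm => /=.
  case: (HN n) => FN lt.
  have : s < PP (N n) + ((n.+1%:R)^-1)%:E by rewrite -lteBlDr.
  move=> /ltW /le_trans; apply.
  apply: leeD; last by rewrite lee_fin ltW.
  by apply: le_measure; rewrite ?inE//; [exact: Fm | exact: bigcup_sup].
move=> A FA; apply: le_trans sB; apply: ereal_sup_ubound; by exists A.
Qed.


Lemma mix (M : set (probability T R)) (Ps : nat -> probability T R) :
  closed_countable_convex M -> (forall i, M (Ps i)) ->
  exists Q, M Q /\ forall A, measurable A -> Q A = 0 -> forall i, Ps i A = 0.
Proof.
move=> hM MP.
pose lam (k : nat) : R := (1 / (2 ^ (k + 1))%:R)%R.
have lam0 k : (0 < lam k)%R by rewrite /lam divr_gt0// ltr0n expn_gt0.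
have lam1 : \sum_(0 <= i <oo) (lam i)%:E = 1.
  have := @cvg_geometric_eseries_half R 1 0.
  by move/cvg_lim => ->//; rewrite expr0 divr1.
have [Q [MQ HQ]] := hM Ps lam MP (fun i => ltW (lam0 i)) lam1.
exists Q; split => // A mA QA i.
have ge0 k : 0 <= (lam k)%:E * Ps k A by rewrite mule_ge0// lee_fin ltW.
have : (lam i)%:E * Ps i A <= 0.
  rewrite -QA HQ//.
  apply: le_trans (nneseries_lim_ge (m:=0) i.+1 (fun n _ _ => ge0 n)).
  by rewrite big_nat_recr//= -[X in X <= _]add0e leeD2r// sume_ge0.
move=> h; have : (lam i)%:E * Ps i A == 0 by rewrite eq_le h ge0.
by rewrite mule_eq0 eqe gt_eqF//= => /eqP.
Qed.


Lemma add00_le (x y : \bar R) : x = 0 -> y = 0 -> x + y <= 0.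
Proof. by move=> -> ->; rewrite adde0. Qed.

Lemma dom_app (P PP : probability T R) A : P `<< PP -> measurable A -> PP A = 0 -> P A = 0.
Proof.
move=> h mA PP0; apply/(measure0_null_setP _ mA); apply: h.
exact/(measure0_null_setP _ mA).
Qed.

Lemma disj_le (mu : probability T R) X Y : measurable X -> measurable Y ->
  X `&` Y = set0 -> mu (X `|` Y) <= mu X -> mu Y = 0.
Proof.
move=> mX mY XY h; rewrite measureU// in h.
apply/eqP; rewrite -measure_le0.
by rewrite -(leeD2lE _ _ (fin_num_measure mu _ mX)) adde0.
Qed.

Lemma exists_equiv (PP : probability T R) (M : set (probability T R)) :
  gen_equiv PP M -> closed_countable_convex M ->
  exists Q, M Q /\ forall A, measurable A -> Q A = 0 -> PP A = 0.
Proof.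
move=> [hdom hnull] hM.
have [P0 MP0] : exists P0, M P0.
  apply/not_existsP => hn.
  have := hnull setT measurableT (fun P MP => ltac:(by case: (hn P))).
  by rewrite probability_setT => /eqP; rewrite onee_eq0.
pose good B := measurable B /\ exists Q, M Q /\
  forall A, measurable A -> A `<=` B -> Q A = 0 -> PP A = 0.
have goodU : forall N : nat -> set T, (forall n, good (N n)) -> good (\bigcup_n N n).
  move=> N hN.
  have mN n : measurable (N n) by case: (hN n).
  have /choice[Qs HQs] : forall n, exists Q, M Q /\
      forall A, measurable A -> A `<=` N n -> Q A = 0 -> PP A = 0.
    by move=> n; case: (hN n).
  have [Q [MQ HQ]] := mix hM (fun n => proj1 (HQs n)).
  split; first exact: bigcupT_measurable.
  exists Q; split => // A mA AN QA.
  have -> : A = \bigcup_n (A `&` N n) by rewrite -setI_bigcupr setIidl.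
  apply: null_bigcup => [n|n]; first exact: measurableI.
  apply: (proj2 (HQs n)) => //; first exact: measurableI.
  exact: (subset_measure0 (measurableI _ _ mA (mN n)) mA (@subIsetl _ _ _) (HQ A mA QA n)).
have [B [[mB [Q [MQ HQ]]] Bmax]] : exists B, good B /\ forall A, good A -> PP A <= PP B.
  apply: maxel => //; first by move=> A [].
  split => //; exists P0; split => // A mA A0 _.
  by rewrite (_ : A = set0) ?measure0//; apply/seteqP; split => // x /A0.
have nB : PP (~` B) = 0.
  apply: hnull; first exact: measurableC.
  move=> P MP.
  pose F2 N := measurable N /\ N `<=` ~` B /\ P N = 0.
  have [N [[mN [NB PN]] Nmax]] : exists N, F2 N /\ forall A, F2 A -> PP A <= PP N.
    apply: maxel; first by move=> A [].
      by split => //; split; [exact: sub0set | exact: measure0].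
    move=> Ns hNs; split; first by apply: bigcupT_measurable => n; case: (hNs n).
    split; first by apply: bigcup_sub => n _; case: (hNs n) => _ [].
    by apply: null_bigcup => n; case: (hNs n) => // _ [].
  pose B' := ~` B `\` N.
  have mB' : measurable B' by apply: measurableD => //; exact: measurableC.
  have gB' : good B'.
    split => //; exists P; split => // A mA AB' PA.
    have F2NA : F2 (N `|` A).
      split; first exact: measurableU.
      split; first by move=> x [/NB//|/AB' []].
      apply/eqP; rewrite -measure_le0; apply: le_trans (measureU2 P mN mA) _.
      by apply: add00_le; [exact: PN|exact: PA].
    apply: (disj_le mN mA) (Nmax _ F2NA).
    by apply/seteqP; split => // x [Nx /AB' [_ ?]].
  pose S n := if n is 0%N then B else B'.
  have gS : good (\bigcup_n S n) by apply: goodU => -[|n] //=; split => //; exists Q.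
  have SE : \bigcup_n S n = B `|` B'.
    apply/seteqP; split => [x [[|n] _ /= Sx]|x [Bx|B'x]]; [by left|by right| |].
    - by exists 0%N.
    - by exists 1%N.
  have PB' : PP B' = 0.
    apply: (disj_le mB mB'); last by rewrite -SE; apply: Bmax.
    by apply/seteqP; split => // x [Bx [nBx _]].
  have PB'0 : P B' = 0 by apply: dom_app PB'; [exact: hdom|].
  have -> : ~` B = B' `|` N.
    apply/seteqP; split => [x nBx|x [[]//|/NB//]].
    by have [Nx|nNx] := pselect (N x); [right|left].
  apply/eqP; rewrite -measure_le0; apply: le_trans (measureU2 P mB' mN) _.
  by apply: add00_le; [exact: PB'0|exact: PN].
exists Q; split => // A mA QA.
have -> : A = (A `&` B) `|` (A `&` ~` B) by rewrite -setIUr setUCr setIT.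
apply/eqP; rewrite -measure_le0.
apply: le_trans (measureU2 PP (measurableI _ _ mA mB) (measurableI _ _ mA (measurableC mB))) _.
apply: add00_le.
  apply: HQ; [exact: measurableI | exact: subIsetr |].
  exact: (subset_measure0 (measurableI _ _ mA mB) mA (@subIsetl _ _ _) QA).
exact: (subset_measure0 (measurableI _ _ mA (measurableC mB)) (measurableC mB) (@subIsetr _ _ _) nB).
Qed.


Lemma rhoP_le (rho : (T -> R) -> R) (P1 P2 : probability T R) (X : T -> R) :
  (forall A, measurable A -> P2 A = 0 -> P1 A = 0) -> measurable_fun setT X ->
  rhoP rho P1 X <= rhoP rho P2 X.
Proof.
move=> h mX; apply: ereal_inf_le_tmp; apply: image_subset => Xt [[mXt bXt] P2E].
split; first by split.
have mE : measurable [set w | Xt w = X w].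
  have := measurable_realfun.measurable_fun_eqr mXt mX measurableT (Y:=[set true]) I.
  rewrite setTI; congr measurable; apply/seteqP; split => w /=; first by move=> /eqP.
  by move=> /eqP.
have P2C : P2 (~` [set w | Xt w = X w]) = 0.
  by rewrite probability_setC// P2E subee.
have P1C := h _ (measurableC mE) P2C.
rewrite -(probability_setT P1) -(setUCr [set w | Xt w = X w]) measureU//.
- by rewrite (_ : _ (~` _) = 0) ?adde0//; exact: P1C.
- exact: measurableC.
- by rewrite setICr.
Qed.

End aux.

Theorem theorem5p6 (d : measure_display) (T : measurableType d) (R : realType)
  (rho : (T -> R) -> R) (M : set (probability T R)) (PP : probability T R) :
  monetary_risk_measure rho ->
  gen_equiv PP M ->
  closed_countable_convex M ->
  forall X : T -> R, Linfty PP X -> rhoP rho PP X = rhoM rho M X.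
Proof.
move=> _ hE hM X [mX _].
have [Q [MQ HQ]] := exists_equiv hE hM.
apply/eqP; rewrite eq_le; apply/andP; split.
- apply: (le_trans (rhoP_le rho HQ mX)).
  by apply: ereal_sup_ubound; exists Q.
- apply: ge_ereal_sup => _ [P MP <-].
  apply: rhoP_le mX => A mA PPA.
  exact: (dom_app (proj1 hE P MP) mA PPA).
Qed.
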